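(* Let $k$ be a field and $A$ a finite-dimensional monomial algebra with two blocks $A_1$ and $A_2$. Let $B$ be the algebra obtained from $A$ by gluing idempotents (vertices) $e_1\in A_1$ and $e_n\in A_2$. Then the radical embedding $B\hookrightarrow A$ restricts to a radical embedding $Z(B)\hookrightarrow Z(A)$. In particular $\dim_kZ(A)=\dim_kZ(B)+1$.
   Context: A monomial algebra is $A=kQ_A/I_A$ with $Q_A$ a finite quiver with vertices $e_1,\dots,e_n$ and $I_A$ an admissible ideal generated by paths. Gluing $e_1,e_n$ (assumed non-isolated): $B$ is the subalgebra of $A$ generated by $e_1+e_n$, $e_2,\dots,e_{n-1}$ and all arrows; $B\cong kQ_B/I_B$ where $Q_B$ is $Q_A$ with $e_1,e_n$ identified and $I_B$ is generated by $I_A$ and all newly formed length-2 paths through the identified vertex. A radical embedding is an algebra monomorphism $\phi:B\to A$ with $\phi(\mathrm{rad}\,B)=\mathrm{rad}\,A$. $Z(\cdot)$ denotes the center. *)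

(* Defs.v *)
From HB Require Import structures.
From mathcomp Require Import all_boot all_order all_algebra.
From mathcomp Require Import falgebra.
Set Implicit Arguments. Unset Strict Implicit. Unset Printing Implicit Defensive.
Import GRing.Theory.
Local Open Scope ring_scope.

Section Monomial.
Variables (K : fieldType) (A : falgType K).
Variables (V E : finType) (src tgt : E -> V).

(* p = a_1 a_2 ... a_m is a path starting at vertex x (left-to-right
   composition: tgt a_i = src a_(i+1)); the empty sequence is the trivial
   path e_x. *)
Definition is_walk (x : V) (p : seq E) : bool :=
  sorted (fun a b => tgt a == src b) p &&
  (if p is a :: _ then src a == x else true).

Definition has_rel (rels : pred (seq E)) (p : seq E) : bool :=
  [exists i : 'I_(size p).+1, exists j : 'I_(size p).+1,
     (i <= j)%N && rels (drop i (take j p))].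

Fixpoint words (N : nat) : seq (seq E) :=
  if N is N'.+1 then [::] :: [seq a :: w | a <- enum E, w <- words N']
  else [:: [::]].

Definition wval (e : V -> A) (a : E -> A) (x : V) (p : seq E) : A :=
  e x * \prod_(b <- p) a b.

Definition nzpaths (rels : pred (seq E)) (N : nat) : seq (V * seq E) :=
  [seq q <- [seq (x, p) | x <- enum V, p <- words N]
     | is_walk q.1 q.2 && ~~ has_rel rels q.2].

(* A = kQ/I, where Q = (V, E, src, tgt), I is the (admissible) ideal
   generated by the paths in rels, e x is the image of the trivial path at x
   and a b the image of the arrow b.  Admissibility: every relation has length
   >= 2 and every path of length >= N lies in I. *)
Definition monomial_presentation (rels : pred (seq E)) (N : nat)
    (e : V -> A) (a : E -> A) : Prop :=
  [/\ (forall p, rels p -> (2 <= size p)%N),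
      (forall x p, is_walk x p -> (N <= size p)%N -> has_rel rels p),
      [/\ (forall x y, e x * e y = if x == y then e x else 0),
      \sum_(x : V) e x = 1 &
      (forall b, e (src b) * a b = a b /\ a b * e (tgt b) = a b)],
      (forall x p, is_walk x p -> has_rel rels p -> wval e a x p = 0)
    & basis_of fullv [seq wval e a q.1 q.2 | q <- nzpaths rels N]].

(* B = subalgebra of A generated by e u + e v, the other e x, and all arrows *)
Definition glue_gens (e : V -> A) (a : E -> A) (u v : V) : seq A :=
  (e u + e v) :: [seq e x | x <- enum V & (x != u) && (x != v)]
              ++ [seq a b | b <- enum E].

Definition glued (e : V -> A) (a : E -> A) (u v : V) : {aspace A} :=
  <<span (glue_gens e a u v)>>%AS.

Definition non_isolated (x : V) : Prop := exists b, (src b == x) || (tgt b == x).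

End Monomial.

Section Blocks.
Variables (K : fieldType) (A : falgType K).

Definition central_idem (c : A) : Prop := c \in 'Z(fullv)%VS /\ c * c = c.

(* c is a primitive central idempotent, i.e. cA is a block of A *)
Definition block_idem (c : A) : Prop :=
  [/\ central_idem c, c != 0 &
      forall d, central_idem d -> d * c = d -> d = 0 \/ d = c].

Definition jrad (U : {vspace A}) (x : A) : Prop :=
  x \in U /\ forall y, y \in U ->
    exists2 z, z \in U & z * (1 - y * x) = 1 /\ (1 - y * x) * z = 1.

End Blocks.

(* Main.v *)
Require Import Defs.
From HB Require Import structures.
From mathcomp Require Import all_boot all_order all_algebra.
From mathcomp Require Import falgebra.
Import GRing.Theory.
Local Open Scope ring_scope.
Set Implicit Arguments. Unset Strict Implicit. Unset Printing Implicit Defensive.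
From mathcomp Require Import zify.

Definition dphi (K : fieldType) (A : falgType K) n (X : n.-tuple A) (i j : 'I_n)
  (y : A) : A := (coord X i y - coord X j y) *: 1.

Fact dphi_lin (K : fieldType) (A : falgType K) n (X : n.-tuple A) (i j : 'I_n) :
  linear (dphi X i j).
Proof.
move=> k y z; rewrite /dphi !linearP /= scalerA -scalerDl; congr (_ *: _).
by rewrite mulrBr opprD addrACA.
Qed.

HB.instance Definition _ (K : fieldType) (A : falgType K) n (X : n.-tuple A) (i j : 'I_n) :=
  GRing.isSemilinear.Build K A A _ (dphi X i j) (GRing.semilinear_linear (dphi_lin X i j)).

Section Mono.
Variables (K : fieldType) (A : falgType K) (V E : finType) (src tgt : E -> V).
Variables (rels : pred (seq E)) (N : nat) (e : V -> A) (a : E -> A) (x0 : V).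
Hypothesis HP : monomial_presentation src tgt rels N e a.

Local Notation pr p := (\prod_(b <- p) a b).
Local Notation s := (nzpaths src tgt rels N).
Local Notation walk := (is_walk src tgt).
Local Notation X := [seq wval e a q.1 q.2 | q <- s].
Local Notation n := (size X).
Local Notation Xt := (in_tuple X).
Local Notation cd i := (coord Xt i).
Local Notation q0 := (x0, [::] : seq E).

Lemma eMe x y : e x * e y = if x == y then e x else 0.
Proof. by case: HP => _ _ [h _ _] _ _. Qed.

Lemma sum_e : \sum_x e x = 1.
Proof. by case: HP => _ _ [_ h _] _ _. Qed.

Lemma ea b : e (src b) * a b = a b.
Proof. by case: HP => _ _ [_ _ h] _ _; case: (h b). Qed.

Lemma ae b : a b * e (tgt b) = a b.
Proof. by case: HP => _ _ [_ _ h] _ _; case: (h b). Qed.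

Lemma e_a x b : e x * a b = if x == src b then a b else 0.
Proof.
rewrite -{1}(ea b) mulrA eMe; case: eqP => [->|_]; first by rewrite ea.
by rewrite mul0r.
Qed.

Lemma a_e b x : a b * e x = if tgt b == x then a b else 0.
Proof.
rewrite -{1}(ae b) -mulrA eMe; case: eqP => [h|_]; last by rewrite mulr0.
by rewrite ae.
Qed.

Lemma walk_nil x : walk x [::].
Proof. by []. Qed.

Lemma walk_cons x b p : walk x (b :: p) = (src b == x) && walk (tgt b) p.
Proof.
rewrite /is_walk /=; case: p => [|c p] /=; first by rewrite andbT.
by rewrite (eq_sym (src c)); case: (_ == _); case: (_ == _); case: path.
Qed.

Lemma epe x p y : walk x p ->
  e x * pr p * e y = if last x (map tgt p) == y then e x * pr p else 0.
Proof.
elim: p x => [|b p IH] x /=; first by rewrite big_nil !mulr1 eMe.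
rewrite walk_cons => /andP[/eqP sb w]; subst x.
rewrite big_cons mulrA ea -(ae b) -!mulrA (mulrA (e (tgt b))) IH //.
case: ifP => _ //; by rewrite !mulr0.
Qed.

Lemma walk_cat x p p' : walk x p -> walk (last x (map tgt p)) p' -> walk x (p ++ p').
Proof.
elim: p x => [|b p IH] x //=.
rewrite !walk_cons => /andP[-> w] w' /=; exact: IH.
Qed.

Lemma wvM x p y p' : walk x p ->
  wval e a x p * wval e a y p' =
  if last x (map tgt p) == y then wval e a x (p ++ p') else 0.
Proof.
move=> w; rewrite /wval mulrA epe //; case: ifP => _; last by rewrite mul0r.
by rewrite big_cat mulrA.
Qed.

Lemma words_size M p : p \in words E M -> (size p <= M)%N.
Proof.
elim: M p => [|M IH] p /=; first by rewrite inE => /eqP->.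
rewrite inE => /orP[/eqP->//|/allpairsP[[b w] [_ /= hw ->]]].
by rewrite /= ltnS IH.
Qed.

Lemma words_mem M p : (size p <= M)%N -> p \in words E M.
Proof.
elim: M p => [|M IH] [|b p] //=; rewrite ?inE ?eqxx //.
rewrite ltnS => h; apply/orP; right.
by apply: (allpairs_f (fun b w => b :: w)); [rewrite mem_enum|apply: IH].
Qed.

Lemma mem_s x p : ((x, p) \in s) = [&& walk x p, ~~ has_rel rels p & (size p <= N)%N].
Proof.
rewrite mem_filter /=; apply/andP/idP.
  case=> /andP[-> ->] /allpairsP[[y w] [_ /= hw [_ ->]]].
  by rewrite (words_size hw).
case/and3P=> w hr hs; split; first by rewrite w hr.
by apply: (allpairs_f (fun x p => (x, p))); [rewrite mem_enum|apply: words_mem].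
Qed.

Lemma WV x p : walk x p -> wval e a x p = 0 \/ (x, p) \in s.
Proof.
move=> w; case: (boolP (has_rel rels p)) => hr.
  by left; case: HP => _ _ _ h _; apply: h.
right; rewrite mem_s w hr /=; case: leqP => // /ltnW h.
by case: HP => _ h' _ _ _; move: (h' x p w h); rewrite (negbTE hr).
Qed.


Lemma freeX : free X.
Proof. by case: HP => _ _ _ _ /basis_free. Qed.

Lemma spanX y : y \in span Xt.
Proof. by case: HP => _ _ _ _ /andP[/eqP-> _]; exact: memvf. Qed.

Lemma uniq_s : uniq s.
Proof. exact: map_uniq (free_uniq freeX). Qed.

Lemma ltn_s (i : 'I_n) : (i < size s)%N.
Proof. by rewrite -(size_map (fun q => wval e a q.1 q.2)) ltn_ord. Qed.

Lemma Xi (i : 'I_n) : X`_i = wval e a (nth q0 s i).1 (nth q0 s i).2.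
Proof. by rewrite (nth_map q0) // ltn_s. Qed.

Lemma s_mem (i : 'I_n) : nth q0 s i \in s.
Proof. by rewrite mem_nth // ltn_s. Qed.

Lemma walk_i (i : 'I_n) : walk (nth q0 s i).1 (nth q0 s i).2.
Proof. by move: (s_mem i); case: (nth q0 s i) => x p; rewrite mem_s => /and3P[]. Qed.

Lemma size_i (i : 'I_n) : (size (nth q0 s i).2 <= N)%N.
Proof. by move: (s_mem i); case: (nth q0 s i) => x p; rewrite mem_s => /and3P[]. Qed.

Lemma CW q : q \in s -> forall i : 'I_n, cd i (wval e a q.1 q.2) = (nth q0 s i == q)%:R.
Proof.
move=> hq i; have hi : (index q s < n)%N by rewrite size_map index_mem.
have -> : wval e a q.1 q.2 = Xt`_(Ordinal hi).
  by rewrite /= (nth_map q0) ?index_mem // nth_index.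
rewrite coord_free ?freeX //.
suff -> : (Ordinal hi == i) = (nth q0 s i == q) by [].
apply/eqP/eqP => [<-|h]; first by rewrite /= nth_index.
by apply: val_inj => /=; rewrite -h index_uniq ?ltn_s ?uniq_s.
Qed.

Lemma CM (m : 'I_n) y z :
  cd m (y * z) = \sum_i \sum_j cd i y * cd j z * cd m (X`_i * X`_j).
Proof.
rewrite {1}(coord_span (spanX y)) {1}(coord_span (spanX z)) mulr_suml linear_sum.
apply: eq_bigr => i _; rewrite mulr_sumr linear_sum; apply: eq_bigr => j _.
by rewrite -scalerAl -scalerAr !linearZ /= mulrA.
Qed.

Lemma PC (m i j : 'I_n) : cd m (X`_i * X`_j) != 0 ->
  last (nth q0 s i).1 (map tgt (nth q0 s i).2) = (nth q0 s j).1 /\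
  nth q0 s m = ((nth q0 s i).1, (nth q0 s i).2 ++ (nth q0 s j).2).
Proof.
rewrite !Xi wvM ?walk_i //; case: ifP => /eqP h; last by rewrite raddf0 eqxx.
have w : walk (nth q0 s i).1 ((nth q0 s i).2 ++ (nth q0 s j).2).
  by apply: walk_cat; rewrite ?walk_i // h walk_i.
case: (WV w) => [->|hs]; first by rewrite raddf0 eqxx.
rewrite (CW hs); case: (nth q0 s m =P _) => [-> _ | _]; first by split.
by rewrite eqxx.
Qed.


Lemma X_triv (m : 'I_n) : (nth q0 s m).2 = [::] -> X`_m = e (nth q0 s m).1.
Proof. by rewrite Xi /wval => ->; rewrite big_nil mulr1. Qed.

Lemma pair_triv (m i j : 'I_n) : (nth q0 s m).2 = [::] ->
  cd m (X`_i * X`_j) = ((i == m) && (j == m))%:R.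
Proof.
move=> hm; case: (boolP ((i == m) && (j == m))) => [/andP[/eqP-> /eqP->] | hn].
  have := X_triv hm => hX.
  by rewrite hX eMe eqxx -hX coord_free ?freeX // eqxx.
case: (eqVneq (cd m (X`_i * X`_j)) 0) => // /PC [hl hq].
have := hm; rewrite hq /= => /(congr1 size); rewrite size_cat => /eqP.
rewrite addn_eq0 !size_eq0 => /andP[/eqP hi /eqP hj].
have ei : nth q0 s i = nth q0 s m.
  rewrite hq hi hj /=; by case: (nth q0 s i) hi => x p /= ->.
have ej : nth q0 s j = nth q0 s m.
  rewrite hq hi hj /=; move: hl; rewrite hi /= => ->.
  by case: (nth q0 s j) hj => x p /= ->.
move: hn; rewrite -!val_eqE /=.
by rewrite -(nth_uniq q0 (ltn_s i) (ltn_s m) uniq_s) -(nth_uniq q0 (ltn_s j) (ltn_s m) uniq_s) ei ej eqxx.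
Qed.

Lemma cd_mul (m : 'I_n) y z : (nth q0 s m).2 = [::] -> cd m (y * z) = cd m y * cd m z.
Proof.
move=> hm.
rewrite CM (bigD1 m) //= [X in _ + X]big1 => [|i /negbTE hi]; last first.
  by rewrite big1 // => j _; rewrite pair_triv // hi mulr0.
rewrite (bigD1 m) //= big1 => [|j /negbTE hj]; last by rewrite pair_triv // hj andbF mulr0.
by rewrite pair_triv // eqxx mulr1 !addr0.
Qed.

Lemma cd1 (m : 'I_n) : (nth q0 s m).2 = [::] -> cd m 1 = 1.
Proof.
move=> hm; have h1 : cd m (X`_m) = 1 by rewrite coord_free ?freeX // eqxx.
have : cd m (X`_m * 1) = 1 by rewrite mulr1.
by rewrite cd_mul // h1 mul1r.
Qed.

Definition G k (y : A) := forall m : 'I_n, (size (nth q0 s m).2 < k)%N -> cd m y = 0.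

Lemma GM k y z : G k y -> G 1 z -> G k.+1 (y * z).
Proof.
move=> Gy Gz m hm; rewrite CM big1 // => i _; rewrite big1 // => j _.
case: (eqVneq (cd m (X`_i * X`_j)) 0) => [->|/PC [_ hq]]; first by rewrite mulr0.
move: hm; rewrite hq /= size_cat => hm.
case: (ltnP (size (nth q0 s i).2) k) => hk; first by rewrite Gy // !mul0r.
by rewrite (Gz j) ?mulr0 ?mul0r //; lia.
Qed.

Lemma GN y : G N.+1 y -> y = 0.
Proof.
by move=> Gy; rewrite (coord_span (spanX y)) big1 // => i _; rewrite Gy ?scale0r // ltnS size_i.
Qed.

Lemma Gnil t : G 1 t -> t ^+ N.+1 = 0.
Proof.
move=> Gt; apply: GN; have H : forall k, G k (t ^+ k).
  by elim => [|k IH]; [move=> m | rewrite exprSr; apply: GM].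
exact: H.
Qed.

Lemma G1P t : G 1 t <-> forall m : 'I_n, (nth q0 s m).2 = [::] -> cd m t = 0.
Proof.
split => h m hm; first by apply: h; rewrite hm.
by apply: h; apply/eqP; rewrite -size_eq0; case: size hm.
Qed.


Lemma has_rel_nil : ~~ has_rel rels [::].
Proof.
apply/existsP => [[i /existsP [j /andP [_ hr]]]].
by case: HP => h _ _ _ _; move: (h _ hr); rewrite take_oversize ?drop_oversize.
Qed.

Lemma nil_in_s w : (w, [::]) \in s.
Proof. by rewrite mem_s walk_nil has_rel_nil. Qed.

Lemma exists_idx w : {m : 'I_n | nth q0 s m = (w, [::])}.
Proof.
have h : (index (w, [::]) s < n)%N by rewrite size_map index_mem nil_in_s.
by exists (Ordinal h); rewrite /= nth_index ?nil_in_s.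
Qed.

Lemma e_wval x : e x = wval e a x [::].
Proof. by rewrite /wval big_nil mulr1. Qed.

Lemma cd_e (m : 'I_n) w x : nth q0 s m = (w, [::]) -> cd m (e x) = (x == w)%:R.
Proof.
move=> hm; rewrite e_wval (CW (nil_in_s x)) hm.
by rewrite xpair_eqE eqxx andbT eq_sym.
Qed.

Lemma cd_path (m : 'I_n) w x b p : nth q0 s m = (w, [::]) -> walk x (b :: p) ->
  cd m (wval e a x (b :: p)) = 0.
Proof.
move=> hm hw; case: (WV hw) => [->|hs]; first by rewrite raddf0.
by rewrite (CW hs) hm xpair_eqE andbF.
Qed.

Lemma a_wval b : a b = wval e a (src b) [:: b].
Proof. by rewrite /wval big_cons big_nil mulr1 ea. Qed.

Lemma walk1 b : walk (src b) [:: b].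
Proof. by rewrite walk_cons eqxx walk_nil. Qed.

Lemma wval_cons x b p : walk x (b :: p) -> wval e a x (b :: p) = \prod_(c <- b :: p) a c.
Proof. by rewrite walk_cons => /andP[/eqP <- _]; rewrite /wval big_cons mulrA ea. Qed.

Lemma prod_in (U : {aspace A}) p : (forall b, a b \in U) -> 1 \in U ->
  \prod_(c <- p) a c \in U.
Proof.
move=> ha h1; elim: p => [|b p IH]; first by rewrite big_nil.
by rewrite big_cons memvM.
Qed.

Lemma comm_e w w' z : (forall y, e w * y * e w' = 0) -> (forall y, e w' * y * e w = 0) ->
  (forall x, x != w -> x != w' -> e x * z = z * e x) -> e w * z = z * e w.
Proof.
move=> h1 h2 hc.
have L : e w * z = e w * z * e w.
  rewrite -{1}[e w * z]mulr1 -sum_e mulr_sumr (bigD1 w) //= big1 ?addr0 // => x hx.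
  case: (eqVneq x w') => [->|hx']; first exact: h1.
  by rewrite -mulrA -hc // mulrA eMe eq_sym (negbTE hx) mul0r.
have R : z * e w = e w * (z * e w).
  rewrite -{1}[z * e w]mul1r -sum_e mulr_suml (bigD1 w) //= big1 ?addr0 // => x hx.
  case: (eqVneq x w') => [->|hx']; first by rewrite mulrA; exact: h2.
  by rewrite mulrA hc // -mulrA eMe (negbTE hx) mulr0.
by rewrite L R mulrA.
Qed.


Lemma jradP (U : {aspace A}) x : 1 \in U ->
  jrad U x <-> x \in U /\ (forall m : 'I_n, (nth q0 s m).2 = [::] -> cd m x = 0).
Proof.
move=> h1; split.
  case=> hx hinv; split => // m hm.
  apply/eqP; apply: contraT => hmu.
  have hy : (cd m x)^-1 *: 1 \in U by rewrite memvZ.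
  case: (hinv _ hy) => z _ [hz _].
  have := congr1 (cd m) hz.
  rewrite cd_mul // cd1 // linearB /= cd1 // -scalerAl mul1r linearZ /= mulVf //.
  by rewrite subrr mulr0 => /eqP; rewrite eq_sym oner_eq0.
case=> hx h0; split => // y hy.
set t := y * x.
have ht : t ^+ N.+1 = 0.
  by apply: Gnil; apply/G1P => m hm; rewrite /t cd_mul // h0 // mulr0.
have htU : t \in U by rewrite memvM.
have hX : forall i, t ^+ i \in U.
  by elim => [|i IH]; rewrite ?expr0 // exprS memvM.
exists (\sum_(i < N.+1) t ^+ i); first by apply: memv_suml => i _.
have e1 : (1 - t) * \sum_(i < N.+1) t ^+ i = 1.
  by rewrite -opprB mulNr -subrX1 ht sub0r opprK.
have hc : t * \sum_(i < N.+1) t ^+ i = (\sum_(i < N.+1) t ^+ i) * t.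
  by rewrite mulr_sumr mulr_suml; apply: eq_bigr => i _; rewrite -exprS -exprSr.
have e2 : (\sum_(i < N.+1) t ^+ i) * (1 - t) = (1 - t) * \sum_(i < N.+1) t ^+ i.
  by rewrite mulrBr mulrBl mulr1 mul1r hc.
by rewrite e2 e1.
Qed.


Section Glue.
Variables (v : V) (c1 c2 : A).
Hypotheses (Hb1 : block_idem c1) (Hb2 : block_idem c2) (Hc : c1 + c2 = 1).
Hypotheses (Hu : e x0 * c1 = e x0) (Hv : e v * c2 = e v).
Local Notation B := (glued e a x0 v).

Lemma central (c : A) : block_idem c -> forall y, c * y = y * c.
Proof.
case=> [[hZ _] _ _] y; move: hZ; rewrite memv_cap => /andP[_ /centvP h].
exact: h (memvf y).
Qed.

Lemma c2E : c2 = 1 - c1.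
Proof. by rewrite -Hc addrAC subrr add0r. Qed.

Lemma idem1 : c1 * c1 = c1.
Proof. by case: Hb1 => [[_ ->]]. Qed.

Lemma c12 : c1 * c2 = 0.
Proof. by rewrite c2E mulrBr mulr1 idem1 subrr. Qed.

Lemma c21 : c2 * c1 = 0.
Proof. by rewrite c2E mulrBl mul1r idem1 subrr. Qed.

Lemma evc1 : e v * c1 = 0.
Proof. by rewrite -Hv -mulrA c21 mulr0. Qed.

Lemma euc2 : e x0 * c2 = 0.
Proof. by rewrite -Hu -mulrA c12 mulr0. Qed.

Lemma blk_uv y : e x0 * y * e v = 0.
Proof. by rewrite -Hu -!mulrA (central Hb1) -!mulrA evc1 !mulr0. Qed.

Lemma blk_vu y : e v * y * e x0 = 0.
Proof. by rewrite -Hv -!mulrA (central Hb2) -!mulrA euc2 !mulr0. Qed.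

Lemma gens_in g : g \in glue_gens e a x0 v -> g \in B.
Proof. by move=> hg; apply: (subvP (sub_agenv _)); exact: memv_span. Qed.

Lemma one_B : 1 \in B.
Proof. by rewrite memvE; exact: sub1_agenv. Qed.

Lemma a_B b : a b \in B.
Proof.
apply: gens_in; rewrite in_cons mem_cat; apply/orP; right; apply/orP; right.
by apply: map_f; rewrite mem_enum.
Qed.

Lemma e_B x : x != x0 -> x != v -> e x \in B.
Proof.
move=> h1 h2; apply: gens_in; rewrite in_cons mem_cat; apply/orP; right; apply/orP; left.
by apply: map_f; rewrite mem_filter h1 h2 mem_enum.
Qed.

Lemma ZB_sub : ('Z(B) <= 'Z(fullv))%VS.
Proof.
apply/subvP => z; rewrite !memv_cap => /andP[hzB /centvP hz]; rewrite memvf /=.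
rewrite -subv_cent1.
have hce : forall x, x != x0 -> x != v -> e x * z = z * e x.
  by move=> x h1 h2; rewrite (hz _ (e_B h1 h2)).
have hcz : forall x, e x \in 'C[z]%VS.
  move=> x; apply/cent1vP.
  case: (eqVneq x x0) => [->|h1]; first exact: comm_e blk_uv blk_vu hce.
  case: (eqVneq x v) => [->|h2]; last exact: hce.
  by apply: comm_e blk_vu blk_uv _ => y hy1 hy2; apply: hce.
have hca : forall b, a b \in 'C[z]%VS by move=> b; apply/cent1vP; rewrite (hz _ (a_B b)).
case: HP => _ _ _ _ /andP[/eqP <- _].
apply/span_subvP => y /mapP[q _ ->].
rewrite /wval (memvM (A := 'C[z]%AS)) //; apply: prod_in => //; exact: cent1v1.
Qed.

Lemma ZA_B x : x \in 'Z(fullv)%VS -> x \in B -> x \in 'Z(B)%VS.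
Proof.
rewrite !memv_cap => /andP[_ /centvP hc] hB; rewrite hB /=.
by apply/centvP => y _; exact: hc (memvf y).
Qed.


Lemma B_phi (mu mv : 'I_n) : nth q0 s mu = (x0, [::]) -> nth q0 s mv = (v, [::]) ->
  forall y, y \in B -> cd mu y = cd mv y.
Proof.
move=> hu hv; set H := lker (linfun (dphi Xt mu mv)).
have memH : forall y, (y \in H) = (cd mu y == cd mv y).
  by move=> y; rewrite memv_ker lfunE /= /dphi scaler_eq0 oner_eq0 orbF subr_eq0.
have mulH : forall y z, y \in H -> z \in H -> y * z \in H.
  by move=> y z; rewrite !memH => /eqP h1 /eqP h2; rewrite cd_mul ?hu // cd_mul ?hv // h1 h2.
have genH : {subset glue_gens e a x0 v <= H}.
  move=> g; rewrite in_cons mem_cat => /or3P[/eqP-> | /mapP[x hx ->] | /mapP[b _ ->]]; rewrite memH.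
  by rewrite !linearD /= !(cd_e _ hu) !(cd_e _ hv) !eqxx (eq_sym v x0) addrC eqxx.
  move: hx; rewrite mem_filter => /andP[/andP[h1 h2] _].
    by rewrite (cd_e _ hu) (cd_e _ hv) (negbTE h1) (negbTE h2).
  by rewrite a_wval (cd_path hu (walk1 b)) (cd_path hv (walk1 b)).
have : (B <= H)%VS.
  rewrite /glued /=; apply: agenv_sub_modl.
    by rewrite -memvE memH cd1 ?hu // cd1 ?hv.
  apply/prodvP => g h hg hh; apply: mulH => //.
  by move/span_subvP: genH => sH; exact: (subvP sH _ hg).
by move/subvP => sB y /sB; rewrite memH => /eqP.
Qed.

Lemma phi_B (mu mv : 'I_n) : nth q0 s mu = (x0, [::]) -> nth q0 s mv = (v, [::]) ->
  x0 != v -> forall y, cd mu y = cd mv y -> y \in B.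
Proof.
move=> hu hv huv y h; rewrite (coord_span (spanX y)).
have hmuv : mu != mv.
  by apply/eqP => hm; move: hv; rewrite -hm hu => -[] /eqP; rewrite (negbTE huv).
rewrite (bigD1 mu) //= (bigD1 mv) /=; last by rewrite eq_sym.
rewrite addrA h -scalerDr.
rewrite (X_triv (m := mu)) ?hu // (X_triv (m := mv)) ?hv //=.
apply: memvD; first by apply: memvZ; apply: gens_in; exact: mem_head.
apply: memv_suml => i /andP[hi1 hi2]; apply: memvZ.
have wi := walk_i i; rewrite Xi; move: wi.
case hq: (nth q0 s i) => [x [|b p]] /= wi.
  rewrite -e_wval; apply: e_B; apply/eqP => hx; subst x.
  by move: hi1; rewrite -val_eqE /= -(nth_uniq q0 (ltn_s i) (ltn_s mu) uniq_s) hq hu eqxx.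
  by move: hi2; rewrite -val_eqE /= -(nth_uniq q0 (ltn_s i) (ltn_s mv) uniq_s) hq hv eqxx.
rewrite wval_cons //; apply: prod_in; [exact: a_B | exact: one_B].
Qed.

Lemma main_glue :
  [/\ ('Z(B) <= 'Z(fullv))%VS,
      (forall x : A, jrad 'Z(B)%VS x <-> jrad 'Z(fullv)%VS x)
    & \dim 'Z(fullv : {vspace A})%VS = (\dim 'Z(B)%VS).+1].
Proof.
have [mu hu] := exists_idx x0; have [mv hv] := exists_idx v.
have huv : x0 != v.
  apply/eqP => h; have Hv2 : e x0 * c2 = e x0 by rewrite h.
  have e0 : e x0 = 0 by rewrite -Hu -Hv2 -mulrA c21 mulr0.
  by move: (cd_e x0 hu); rewrite e0 raddf0 eqxx => /eqP; rewrite eq_sym oner_eq0.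
have oneZB : 1 \in 'Z(B)%VS by rewrite memv_cap one_B centv1.
have oneZA : (1 : A) \in 'Z(fullv : {vspace A})%VS by rewrite memv_cap memvf centv1.
have triv_u : (nth q0 s mu).2 = [::] by rewrite hu.
have triv_v : (nth q0 s mv).2 = [::] by rewrite hv.
split; first exact: ZB_sub.
  move=> x; have JB := jradP (U := 'Z(B)%AS) x oneZB.
  have JA := jradP (U := 'Z(fullv)%AS) x oneZA.
  split => [/JB [hx h0] | /JA [hx h0]].
    by apply/JA; split => //; exact: (subvP ZB_sub).
  apply/JB; split => //; apply: ZA_B => //; apply: (phi_B hu hv huv).
  by rewrite h0 // h0.
have c1Z : c1 \in 'Z(fullv)%VS by case: Hb1 => [[]].
have cmu : cd mu c1 = 1.
  by move: (congr1 (cd mu) Hu); rewrite cd_mul ?hu // (cd_e _ hu) eqxx mul1r.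
have cmv : cd mv c1 = 0.
  by move: (congr1 (cd mv) evc1); rewrite cd_mul ?hv // (cd_e _ hv) eqxx mul1r raddf0.
have hsum : 'Z(fullv)%VS = ('Z(B) + <[c1]>)%VS.
  apply/eqP; rewrite eqEsubv; apply/andP; split.
    apply/subvP => z hz; set k := cd mu z - cd mv z.
    have hz' : z - k *: c1 \in 'Z(B)%VS.
      apply: ZA_B; first by apply: memvB => //; apply: memvZ.
      apply: (phi_B hu hv huv).
      by rewrite !linearB !linearZ /= cmu cmv mulr1 mulr0 subr0 /k opprB addrC subrK.
    have -> : z = (z - k *: c1) + k *: c1 by rewrite subrK.
    by apply: memv_add hz' (memvZ _ (memv_line _)).
  by rewrite subv_add ZB_sub /= -memvE c1Z.
have hcap : ('Z(B) :&: <[c1]> = 0)%VS.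
  apply/eqP; rewrite -subv0; apply/subvP => y /memv_capP[hy /vlineP[k hk]].
  rewrite memv0 hk; move: hy; rewrite memv_cap => /andP[hyB _].
  move: (B_phi hu hv hyB); rewrite hk !linearZ /= cmu cmv mulr1 mulr0 => ->.
  by rewrite scale0r.
have c1n0 : c1 != 0.
  by apply/eqP => h; move: cmu; rewrite h raddf0 => /eqP; rewrite eq_sym oner_eq0.
by rewrite hsum dimv_disjoint_sum // dim_vline c1n0 addn1.
Qed.

End Glue.

End Mono.

Unset Implicit Arguments.

Theorem proposition6p7 (K : fieldType) (A : falgType K)
    (V E : finType) (src tgt : E -> V) (rels : pred (seq E)) (N : nat)
    (e : V -> A) (a : E -> A) (u v : V) (c1 c2 : A) :
  monomial_presentation src tgt rels N e a ->
  block_idem c1 -> block_idem c2 -> c1 + c2 = 1 ->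
  e u * c1 = e u -> e v * c2 = e v ->
  non_isolated src tgt u -> non_isolated src tgt v ->
  let B := glued e a u v in
  [/\ ('Z(B) <= 'Z(fullv))%VS,
      (forall x : A, jrad 'Z(B)%VS x <-> jrad 'Z(fullv)%VS x)
    & \dim 'Z(fullv : {vspace A})%VS = (\dim 'Z(B)%VS).+1].
Proof.
move=> HP Hb1 Hb2 Hc Hu Hv _ _ B.
exact: (main_glue HP Hb1 Hb2 Hc Hu Hv).
Qed.
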